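(* If $Q$ and $Q'$ are proper quadrilaterals in $K^2$ sharing the same vertices, then two lines are $Q$-orthogonal if and only if they are $Q'$-orthogonal.
   Context: $K$ is a field of characteristic $\neq 2$. Every line $L$ in $K^2$ has an equation $tX-uY+v=0$ normalized so that $t=1$ if $u=0$ and $u=1$ if $u\neq 0$; coefficients denoted $t_L,u_L,v_L$. A quadrilateral $Q=ABA'B'$ consists of four distinct lines $A,B,A',B'$ (sides), not all through one point, with adjacent sides ($A,B$; $B,A'$; $A',B'$; $B',A$) not parallel; opposite sides may be parallel. Vertices: $A\cap B$, $B\cap A'$, $A'\cap B'$, $B'\cap A$. $Q$ is proper if no three sides pass through a common point. Let $\alpha=t_Au_Bu_{A'}u_{B'}-u_At_Bu_{A'}u_{B'}+u_Au_Bt_{A'}u_{B'}-u_Au_Bu_{A'}t_{B'}$, $\beta=t_Au_Bt_{A'}u_{B'}-u_At_Bu_{A'}t_{B'}$, $\gamma=t_At_Bt_{A'}u_{B'}-t_At_Bu_{A'}t_{B'}+t_Au_Bt_{A'}t_{B'}-u_At_Bt_{A'}t_{B'}$, and $\langle \mathbf v,\mathbf w\rangle_Q=\mathbf v^T\begin{pmatrix}\gamma&-\beta\\-\beta&\alpha\end{pmatrix}\mathbf w$. Lines $\ell_1,\ell_2$ are $Q$-orthogonal if $\langle (u_{\ell_1},t_{\ell_1}),(u_{\ell_2},t_{\ell_2})\rangle_Q=0$. *)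

(* Defs.v *)
From HB Require Import structures.
From mathcomp Require Import all_boot all_order all_algebra.
Set Implicit Arguments. Unset Strict Implicit. Unset Printing Implicit Defensive.
Import GRing.Theory.
Local Open Scope ring_scope.

(* A line of K^2, given by its normalized equation  t X - u Y + v = 0,
   normalized so that t = 1 if u = 0 and u = 1 if u <> 0. *)
Record line (K : fieldType) := Line {
  t_ : K; u_ : K; v_ : K;
  line_normalized : ((u_ == 0) && (t_ == 1)) || (u_ == 1) }.

Definition point (K : fieldType) := (K * K)%type.

Definition on_line (K : fieldType) (p : point K) (L : line K) : Prop :=
  t_ L * p.1 - u_ L * p.2 + v_ L = 0.

(* parallel lines (same direction; this includes equal lines) *)
Definition parallel (K : fieldType) (L M : line K) : Prop :=
  t_ L * u_ M - u_ L * t_ M = 0.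

Definition is_quad (K : fieldType) (A B A' B' : line K) : Prop :=
  ([/\ A <> B, A <> A' & A <> B'] /\ [/\ B <> A', B <> B' & A' <> B']) /\
  ~ (exists p, [/\ on_line p A, on_line p B, on_line p A' & on_line p B']) /\
  [/\ ~ parallel A B, ~ parallel B A', ~ parallel A' B' & ~ parallel B' A].

Definition concurrent3 (K : fieldType) (L M N : line K) : Prop :=
  exists p, [/\ on_line p L, on_line p M & on_line p N].

Definition is_proper_quad (K : fieldType) (A B A' B' : line K) : Prop :=
  is_quad A B A' B' /\
  [/\ ~ concurrent3 A B A', ~ concurrent3 A B B',
      ~ concurrent3 A A' B' & ~ concurrent3 B A' B'].

(* p is a vertex of Q = A B A' B' : one of A∩B, B∩A', A'∩B', B'∩A
   (each is a single point since adjacent sides are not parallel) *)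
Definition is_vertex (K : fieldType) (A B A' B' : line K) (p : point K) : Prop :=
  (on_line p A /\ on_line p B) \/ (on_line p B /\ on_line p A') \/
  (on_line p A' /\ on_line p B') \/ (on_line p B' /\ on_line p A).

Definition qalpha (K : fieldType) (A B A' B' : line K) : K :=
  t_ A * u_ B * u_ A' * u_ B' - u_ A * t_ B * u_ A' * u_ B'
  + u_ A * u_ B * t_ A' * u_ B' - u_ A * u_ B * u_ A' * t_ B'.

Definition qbeta (K : fieldType) (A B A' B' : line K) : K :=
  t_ A * u_ B * t_ A' * u_ B' - u_ A * t_ B * u_ A' * t_ B'.

Definition qgamma (K : fieldType) (A B A' B' : line K) : K :=
  t_ A * t_ B * t_ A' * u_ B' - t_ A * t_ B * u_ A' * t_ B'
  + t_ A * u_ B * t_ A' * t_ B' - u_ A * t_ B * t_ A' * t_ B'.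

Definition qform (K : fieldType) (A B A' B' : line K) (v w : K * K) : K :=
  v.1 * (qgamma A B A' B' * w.1 - qbeta A B A' B' * w.2)
  + v.2 * (- qbeta A B A' B' * w.1 + qalpha A B A' B' * w.2).

Definition q_orthogonal (K : fieldType) (A B A' B' : line K) (l1 l2 : line K) : Prop :=
  qform A B A' B' (u_ l1, t_ l1) (u_ l2, t_ l2) = 0.

(* Main.v *)
Require Import Defs.
From mathcomp Require Import all_boot all_order all_algebra.
From mathcomp Require Import ring.
Import GRing.Theory.
Set Implicit Arguments.
Local Open Scope ring_scope.

Section S.
Variable K : fieldType.

Definition Mq (a1 a2 b1 b2 c1 c2 d1 d2 : K) (w z : K * K) : K :=
  let al := a2*b1*c1*d1 - a1*b2*c1*d1 + a1*b1*c2*d1 - a1*b1*c1*d2 in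
  let be := a2*b1*c2*d1 - a1*b2*c1*d2 in
  let ga := a2*b2*c2*d1 - a2*b2*c1*d2 + a2*b1*c2*d2 - a1*b2*c2*d2 in
  w.1 * (ga * z.1 - be * z.2) + w.2 * (- be * z.1 + al * z.2).

Definition Nf (P1 P2 P3 P4 : point K) (w z : K * K) : K :=
  Mq (P1.1-P4.1) (P1.2-P4.2) (P2.1-P1.1) (P2.2-P1.2)
     (P3.1-P2.1) (P3.2-P2.2) (P4.1-P3.1) (P4.2-P3.2) w z.

Lemma pair_eq (p q : point K) : p.1 = q.1 -> p.2 = q.2 -> p = q.
Proof. by case: p q => [? ?] [? ?] /= -> ->. Qed.

Lemma dir_lemma (L : line K) (p q : point K) :
  on_line p L -> on_line q L -> p <> q ->
  exists l, l != 0 /\ q.1 - p.1 = l * u_ L /\ q.2 - p.2 = l * t_ L.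
Proof.
rewrite /on_line => hp hq hpq.
case/orP: (line_normalized L) => [/andP[/eqP u0 /eqP t1] | /eqP u1].
- rewrite u0 t1 in hp hq.
  have e1 : q.1 - p.1 = 0.
    have -> : q.1 - p.1 = (1 * q.1 - 0 * q.2 + v_ L) - (1 * p.1 - 0 * p.2 + v_ L) by ring.
    by rewrite hp hq subrr.
  exists (q.2 - p.2); split; last by rewrite u0 t1 e1; split; ring.
  apply/eqP => h; apply: hpq; apply: pair_eq.
  + by apply/eqP; rewrite eq_sym -subr_eq0 e1.
  + by apply/eqP; rewrite eq_sym -subr_eq0 h.
- rewrite u1 in hp hq.
  have e1 : q.2 - p.2 = t_ L * (q.1 - p.1).
    have -> : q.2 - p.2 = t_ L * (q.1 - p.1) - ((t_ L * q.1 - 1 * q.2 + v_ L) - (t_ L * p.1 - 1 * p.2 + v_ L)) by ring.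
    by rewrite hp hq subrr subr0.
  exists (q.1 - p.1); split; last by rewrite u1 e1; split; ring.
  apply/eqP => h; apply: hpq; apply: pair_eq.
  + by apply/eqP; rewrite eq_sym -subr_eq0 h.
  + by apply/eqP; rewrite eq_sym -subr_eq0 e1 h mulr0.
Qed.

Lemma inter_ex (L M : line K) : ~ parallel L M ->
  exists p, on_line p L /\ on_line p M.
Proof.
rewrite /parallel => hd.
have d0 : t_ L * u_ M - u_ L * t_ M != 0 by apply/eqP.
exists ((u_ L * v_ M - v_ L * u_ M) / (t_ L * u_ M - u_ L * t_ M),
        (t_ L * v_ M - t_ M * v_ L) / (t_ L * u_ M - u_ L * t_ M)).
rewrite /on_line /=; split; field; exact: d0.
Qed.

Lemma inter_uniq (L M : line K) (p q : point K) : ~ parallel L M ->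
  on_line p L -> on_line p M -> on_line q L -> on_line q M -> p = q.
Proof.
rewrite /parallel /on_line => hd hpL hpM hqL hqM.
have d0 : t_ L * u_ M - u_ L * t_ M != 0 by apply/eqP.
have e1 : (t_ L * u_ M - u_ L * t_ M) * (p.1 - q.1) = 0.
  have -> : (t_ L * u_ M - u_ L * t_ M) * (p.1 - q.1) =
    u_ M * ((t_ L * p.1 - u_ L * p.2 + v_ L) - (t_ L * q.1 - u_ L * q.2 + v_ L))
    - u_ L * ((t_ M * p.1 - u_ M * p.2 + v_ M) - (t_ M * q.1 - u_ M * q.2 + v_ M)) by ring.
  by rewrite hpL hpM hqL hqM !subrr !mulr0 subrr.
have e2 : (t_ L * u_ M - u_ L * t_ M) * (p.2 - q.2) = 0.
  have -> : (t_ L * u_ M - u_ L * t_ M) * (p.2 - q.2) =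
    t_ M * ((t_ L * p.1 - u_ L * p.2 + v_ L) - (t_ L * q.1 - u_ L * q.2 + v_ L))
    - t_ L * ((t_ M * p.1 - u_ M * p.2 + v_ M) - (t_ M * q.1 - u_ M * q.2 + v_ M)) by ring.
  by rewrite hpL hpM hqL hqM !subrr !mulr0 subrr.
move/eqP: e1; rewrite mulf_eq0 (negbTE d0) /= subr_eq0 => /eqP e1.
move/eqP: e2; rewrite mulf_eq0 (negbTE d0) /= subr_eq0 => /eqP e2.
exact: pair_eq.
Qed.


Lemma perm_lemma (P1 P2 P3 P4 R1 R2 R3 R4 : point K) (w z : K * K) :
  R1 <> R2 -> R1 <> R3 -> R1 <> R4 -> R2 <> R3 -> R2 <> R4 -> R3 <> R4 ->
  (R1 = P1 \/ R1 = P2 \/ R1 = P3 \/ R1 = P4) ->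
  (R2 = P1 \/ R2 = P2 \/ R2 = P3 \/ R2 = P4) ->
  (R3 = P1 \/ R3 = P2 \/ R3 = P3 \/ R3 = P4) ->
  (R4 = P1 \/ R4 = P2 \/ R4 = P3 \/ R4 = P4) ->
  Nf R1 R2 R3 R4 w z = Nf P1 P2 P3 P4 w z \/ Nf R1 R2 R3 R4 w z = - Nf P1 P2 P3 P4 w z.
Proof.
move=> h12 h13 h14 h23 h24 h34 e1 e2 e3 e4.
case: e1 => [?|[?|[?|?]]]; case: e2 => [?|[?|[?|?]]];
case: e3 => [?|[?|[?|?]]]; case: e4 => [?|[?|[?|?]]]; subst;
try (exfalso; congruence);
rewrite /Nf /Mq /=; first [left; ring | right; ring].
Qed.

Lemma quad_pts (A B A' B' : line K) : is_proper_quad A B A' B' ->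
  exists P1 P2 P3 P4 : point K,
   [/\ (forall p, is_vertex A B A' B' p -> p = P1 \/ p = P2 \/ p = P3 \/ p = P4),
       [/\ is_vertex A B A' B' P1, is_vertex A B A' B' P2,
           is_vertex A B A' B' P3 & is_vertex A B A' B' P4],
       (P1 <> P2 /\ P1 <> P3 /\ P1 <> P4 /\ P2 <> P3 /\ P2 <> P4 /\ P3 <> P4) &
       (exists c, c != 0 /\ forall w z, Nf P1 P2 P3 P4 w z = c * qform A B A' B' w z)].
Proof.
move=> [[_ [_ [nAB nBA' nA'B' nB'A]]] [c1 c2 c3 c4]].
have [P1 [h1A h1B]] := inter_ex nAB.
have [P2 [h2B h2A']] := inter_ex nBA'.
have [P3 [h3A' h3B']] := inter_ex nA'B'.
have [P4 [h4B' h4A]] := inter_ex nB'A.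
have d12 : P1 <> P2 by move=> e; rewrite -e in h2B h2A'; apply: c1; exists P1.
have d13 : P1 <> P3 by move=> e; rewrite -e in h3A' h3B'; apply: c1; exists P1.
have d14 : P1 <> P4 by move=> e; rewrite -e in h4B' h4A; apply: c2; exists P1.
have d23 : P2 <> P3 by move=> e; rewrite -e in h3A' h3B'; apply: c4; exists P2.
have d24 : P2 <> P4 by move=> e; rewrite -e in h4B' h4A; apply: c1; exists P2.
have d34 : P3 <> P4 by move=> e; rewrite -e in h4B' h4A; apply: c3; exists P3.
exists P1, P2, P3, P4; split.
- move=> p [[hA hB]|[[hB hA']|[[hA' hB']|[hB' hA]]]].
  + by left; apply: (inter_uniq nAB).
  + by right; left; apply: (inter_uniq nBA').
  + by right; right; left; apply: (inter_uniq nA'B').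
  + by right; right; right; apply: (inter_uniq nB'A).
- rewrite /is_vertex; split; tauto.
- by do !split.
have [la [la0 [ea1 ea2]]] := dir_lemma h4A h1A (nesym d14).
have [lb [lb0 [eb1 eb2]]] := dir_lemma h1B h2B d12.
have [lc [lc0 [ec1 ec2]]] := dir_lemma h2A' h3A' d23.
have [ld [ld0 [ed1 ed2]]] := dir_lemma h3B' h4B' d34.
exists (la * lb * lc * ld); split; first by rewrite !mulf_neq0.
move=> w z; rewrite /Nf ea1 ea2 eb1 eb2 ec1 ec2 ed1 ed2.
rewrite /Mq /qform /qalpha /qbeta /qgamma /=; ring.
Qed.
End S.

Theorem corollary2p7 (K : fieldType) (hK : (2%:R : K) != 0)
  (A B A' B' C D C' D' : line K) :
  is_proper_quad A B A' B' -> is_proper_quad C D C' D' ->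
  (forall p : point K, is_vertex A B A' B' p <-> is_vertex C D C' D' p) ->
  forall l1 l2 : line K,
    q_orthogonal A B A' B' l1 l2 <-> q_orthogonal C D C' D' l1 l2.
Proof.
move=> hQ hQ' hv l1 l2.
have [P1 [P2 [P3 [P4 [vP _ _ [c [c0 hc]]]]]]] := quad_pts hQ.
have [R1 [R2 [R3 [R4 [_ [v1 v2 v3 v4] [d12 [d13 [d14 [d23 [d24 d34]]]]] [c' [c0' hc']]]]]]] := quad_pts hQ'.
have := perm_lemma (u_ l1, t_ l1) (u_ l2, t_ l2) d12 d13 d14 d23 d24 d34
  (vP _ (proj2 (hv _) v1)) (vP _ (proj2 (hv _) v2))
  (vP _ (proj2 (hv _) v3)) (vP _ (proj2 (hv _) v4)).
rewrite /q_orthogonal hc hc'.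
set x := qform A B A' B' _ _; set y := qform C D C' D' _ _.
move=> hor.
have key : (c' * y = 0) <-> (c * x = 0).
  case: hor => ->; split => //.
  - by move/eqP; rewrite oppr_eq0 => /eqP.
  - by move=> ->; rewrite oppr0.
split=> h.
- have /eqP : c' * y = 0 by apply/key; rewrite h mulr0.
  by rewrite mulf_eq0 (negbTE c0') /= => /eqP.
- have /eqP : c * x = 0 by apply/key; rewrite h mulr0.
  by rewrite mulf_eq0 (negbTE c0) /= => /eqP.
Qed.
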